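(* Let $\Omega\subset\mathbb{R}^N$ be a domain satisfying condition $(\mathrm{S}_r)$ for some $r>0$. For each $x_0\in\partial\Omega$, with $a,b$ as in $(\mathrm{S}_r)$ for $x_0$, define $\vec p(x_0)=\frac{b-a}{|b-a|}$ (this is well defined). Then $|\vec p(x_0)-\vec p(y_0)|\le\frac1r|x_0-y_0|$ for all $x_0,y_0\in\partial\Omega$.
   Context: A domain is an open connected set. $B_r(a)$ denotes the open Euclidean ball. Condition $(\mathrm{S}_r)$: for every $x_0\in\partial\Omega$ there exist $a,b\in\mathbb{R}^N$ such that $B_r(a)\subset\Omega$, $B_r(b)\subset\mathbb{R}^N\setminus\bar\Omega$ and $|x_0-a|=|x_0-b|=r$. *)

(* Defs.v *)
(* R^N is modelled as 'rV[R]_N with R : realType. *)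
From HB Require Import structures.
From mathcomp Require Import all_boot all_order all_algebra.
From mathcomp Require Import all_classical all_reals all_analysis.
Set Implicit Arguments. Unset Strict Implicit. Unset Printing Implicit Defensive.
Import Order.TTheory GRing.Theory Num.Theory.
Import numFieldNormedType.Exports.
Local Open Scope classical_set_scope.
Local Open Scope ring_scope.

Definition enorm {R : realType} {N : nat} (x : 'rV[R]_N) : R :=
  Num.sqrt (\sum_(i < N) (x ord0 i) ^+ 2).

Definition eball {R : realType} {N : nat} (a : 'rV[R]_N) (r : R) : set 'rV[R]_N :=
  [set x | enorm (x - a) < r].

Definition bdry {R : realType} {N : nat} (A : set 'rV[R]_N) : set 'rV[R]_N :=
  closure A `\` interior A.

Definition domain {R : realType} {N : nat} (O : set 'rV[R]_N) : Prop :=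
  open O /\ connected O.

Definition Sr_witness {R : realType} {N : nat} (O : set 'rV[R]_N) (r : R)
  (x0 a b : 'rV[R]_N) : Prop :=
  eball a r `<=` O /\ eball b r `<=` ~` closure O /\
  enorm (x0 - a) = r /\ enorm (x0 - b) = r.

Definition cond_S {R : realType} {N : nat} (O : set 'rV[R]_N) (r : R) : Prop :=
  forall x0, bdry O x0 -> exists a b, Sr_witness O r x0 a b.

(* Main.v *)
Require Import Defs.
From HB Require Import structures.
From mathcomp Require Import all_boot all_order all_algebra.
From mathcomp Require Import all_classical all_reals all_analysis.
From mathcomp Require Import ring lra.
Import Order.TTheory GRing.Theory Num.Theory.
Import numFieldNormedType.Exports.
Local Open Scope classical_set_scope.
Local Open Scope ring_scope.


Section Aux.
Variables (R : realType) (N : nat).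
Implicit Types (x y z : 'rV[R]_N).

Definition dot x y : R := \sum_(i < N) x ord0 i * y ord0 i.

Lemma enormE x : enorm x = Num.sqrt (dot x x).
Proof. by rewrite /enorm /dot; congr Num.sqrt; apply: eq_bigr => i _; rewrite expr2. Qed.

Lemma dotDl x y z : dot (x + y) z = dot x z + dot y z.
Proof. by rewrite /dot -big_split; apply: eq_bigr => i _; rewrite mxE mulrDl. Qed.
Lemma dotNl x z : dot (- x) z = - dot x z.
Proof. by rewrite /dot -sumrN; apply: eq_bigr => i _; rewrite mxE mulNr. Qed.
Lemma dotZl k x z : dot (k *: x) z = k * dot x z.
Proof. by rewrite /dot mulr_sumr; apply: eq_bigr => i _; rewrite mxE mulrA. Qed.
Lemma dotC x y : dot x y = dot y x.
Proof. by apply: eq_bigr => i _; rewrite mulrC. Qed.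
Lemma dotDr x y z : dot z (x + y) = dot z x + dot z y.
Proof. by rewrite dotC dotDl !(dotC z). Qed.
Lemma dotNr x z : dot z (- x) = - dot z x.
Proof. by rewrite dotC dotNl dotC. Qed.
Lemma dotZr k x z : dot z (k *: x) = k * dot z x.
Proof. by rewrite dotC dotZl dotC. Qed.
Lemma dot_ge0 x : 0 <= dot x x.
Proof. by apply: sumr_ge0 => i _; rewrite -expr2 sqr_ge0. Qed.
Lemma dot_eq0 x : dot x x = 0 -> x = 0.
Proof.
move=> H; apply/rowP => i; rewrite mxE.
have := psumr_eq0P (fun i _ => (ltac:(rewrite -expr2; exact: sqr_ge0) : 0 <= x ord0 i * x ord0 i)) H (i:=i) isT.
by move/eqP; rewrite mulf_eq0 orbb => /eqP.
Qed.

Lemma enorm_lt x r : 0 < r -> dot x x < r ^+ 2 -> enorm x < r.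
Proof.
move=> hr h; have e : r = Num.sqrt (r ^+ 2) by rewrite sqrtr_sqr gtr0_norm.
by rewrite enormE [X in _ < X]e ltr_sqrt // exprn_gt0.
Qed.

Lemma enorm_dot x r : enorm x = r -> dot x x = r ^+ 2.
Proof. by move=> h; rewrite -h enormE sqr_sqrtr // dot_ge0. Qed.

Arguments enorm_dot {x r}.

Lemma enorm_le x y c : 0 <= c -> dot x x <= c ^+ 2 * dot y y ->
  enorm x <= c * enorm y.
Proof.
move=> hc h; have e : c = Num.sqrt (c ^+ 2) by rewrite sqrtr_sqr ger0_norm.
rewrite !enormE [X in _ <= X * _]e -sqrtrM ?sqr_ge0 // ler_sqrt //.
by apply: mulr_ge0; [exact: sqr_ge0|exact: dot_ge0].
Qed.

Lemma sep (O : set 'rV[R]_N) c1 c2 r : 0 < r ->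
  eball c1 r `<=` O -> eball c2 r `<=` ~` closure O ->
  4 * r ^+ 2 <= dot (c1 - c2) (c1 - c2).
Proof.
move=> hr H1 H2; rewrite leNgt; apply/negP => Hlt.
set m := (2:R)^-1 *: (c1 + c2).
have e1 : m - c1 = (- (2:R)^-1) *: (c1 - c2).
  by apply/rowP => i; rewrite !mxE; field.
have e2 : m - c2 = (2:R)^-1 *: (c1 - c2).
  by apply/rowP => i; rewrite !mxE; field.
have m1 : eball c1 r m.
  rewrite /eball /=; apply: enorm_lt => //.
  rewrite e1 dotZl dotZr; lra.
have m2 : eball c2 r m.
  rewrite /eball /=; apply: enorm_lt => //.
  rewrite e2 dotZl dotZr; lra.
exact: (H2 _ m2) (subset_closure (H1 _ m1)).
Qed.

Arguments sep {O c1 c2 r}.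

Lemma wit (O : set 'rV[R]_N) r x a b : 0 < r -> Sr_witness O r x a b ->
  b - x = x - a.
Proof.
move=> hr [Ha [Hb [Hxa Hxb]]].
have S := sep hr Ha Hb.
have da := enorm_dot Hxa; have db := enorm_dot Hxb.
have eab : a - b = (x - b) - (x - a) by apply/rowP => i; rewrite !mxE; ring.
rewrite eab in S.
suff Z : (x - a) + (x - b) = 0.
  apply/rowP => i; move/rowP: Z => /(_ i).
  rewrite !mxE => ?; lra.
move: S da db; move: (x - a) (x - b) => u w S da db.
apply: dot_eq0; have C := dotC u w.
apply/eqP; rewrite eq_le dot_ge0 andbT.
move: S; rewrite !(dotDl, dotDr, dotNl, dotNr) da db C => S.
lra.
Qed.

End Aux.
Arguments dot {R N}.
Arguments dotC {R N}.
Arguments enorm_dot {R N x r}.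
Arguments sep {R N O c1 c2 r}.
Arguments wit {R N O r x a b}.

Theorem lemma2p2 (R : realType) (N : nat) (O : set 'rV[R]_N) (r : R) :
  0 < r -> domain O -> cond_S O r ->
  forall x0 y0 a b a' b' : 'rV[R]_N,
    bdry O x0 -> bdry O y0 ->
    Sr_witness O r x0 a b -> Sr_witness O r y0 a' b' ->
    enorm ((enorm (b - a))^-1 *: (b - a) - (enorm (b' - a'))^-1 *: (b' - a'))
      <= r^-1 * enorm (x0 - y0).
Proof.
move=> hr _ _ x0 y0 a b a' b' _ _ W1 W2.
have e1 := wit hr W1; have e2 := wit hr W2.
have E1 i : b ord0 i - x0 ord0 i = x0 ord0 i - a ord0 i.
  by move/rowP: e1 => /(_ i); rewrite !mxE.
have E2 i : b' ord0 i - y0 ord0 i = y0 ord0 i - a' ord0 i.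
  by move/rowP: e2 => /(_ i); rewrite !mxE.
case: W1 => [Ha [Hb [Hxa _]]]; case: W2 => [Ha' [Hb' [Hya _]]].
have da := enorm_dot Hxa; have dv := enorm_dot Hya.
have S1 := sep hr Ha Hb'; have S2 := sep hr Ha' Hb.
have I1 : a - b' = - (x0 - a) + (x0 - y0) - (y0 - a').
  by apply/rowP => i; rewrite !mxE; have := E2 i; lra.
have I2 : a' - b = - (y0 - a') - (x0 - y0) - (x0 - a).
  by apply/rowP => i; rewrite !mxE; have := E1 i; lra.
have Iba : b - a = 2 *: (x0 - a).
  by apply/rowP => i; rewrite !mxE; have := E1 i; lra.
have Iba' : b' - a' = 2 *: (y0 - a').
  by apply/rowP => i; rewrite !mxE; have := E2 i; lra.
have n1 : enorm (b - a) = 2 * r.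
  rewrite enormE Iba dotZl dotZr da.
  have -> : (2:R) * (2 * r ^+ 2) = (2 * r) ^+ 2 by ring.
  by rewrite sqrtr_sqr ger0_norm //; lra.
have n2 : enorm (b' - a') = 2 * r.
  rewrite enormE Iba' dotZl dotZr dv.
  have -> : (2:R) * (2 * r ^+ 2) = (2 * r) ^+ 2 by ring.
  by rewrite sqrtr_sqr ger0_norm //; lra.
have X : (enorm (b - a))^-1 *: (b - a) - (enorm (b' - a'))^-1 *: (b' - a')
   = r^-1 *: ((x0 - a) - (y0 - a')).
  rewrite n1 n2 Iba Iba'; apply/rowP => i; rewrite !mxE; field; lra.
rewrite X; apply: enorm_le; first by rewrite invr_ge0 ltW.
rewrite dotZl dotZr mulrA -expr2; apply: ler_wpM2l; first exact: sqr_ge0.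
rewrite I1 I2 in S1 S2.
move: S1 S2 da dv; clear X n1 n2 Iba Iba' I1 I2 Hxa Hya e1 e2 E1 E2.
move: (x0 - a) (y0 - a') (x0 - y0) => u v e S1 S2 da dv.
have C1 := dotC u v; have C2 := dotC u e; have C3 := dotC v e.
move: S1 S2; rewrite !(dotDl, dotDr, dotNl, dotNr) => S1 S2.
lra.
Qed.
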